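(* Let $f_1,\dots,f_n:\mathbb{R}^p\to\mathbb{R}$ be continuously differentiable, let $m>0$, and consider $g(x)=\frac1n\sum_{i=1}^nf_i(x)+\frac m2\|x\|^2$ with minimizer $x^*$. Assume $\sum_{i=1}^nf_i\in\mathcal F(0,L)$ and $i_k$ sampled IID uniformly from $\{1,\dots,n\}$. Consider SDCA with stepsize $\alpha$ initialized from arbitrary $y_i^0\in\mathbb{R}^p$. 1. If every $f_i\in\mathcal F(0,L)$, then for any $0<\alpha\le\frac2{L+2mn}$, $$\mathbb{E}\left[\|x^k-x^*\|^2+\frac{\alpha}{(1-\alpha mn)mn}\sum_{i=1}^n\|y_i^k+\nabla f_i(x^* )\|^2\right]\le(1-m\alpha)^kR^0,$$ where $R^0=\|x^0-x^*\|^2+\frac{\alpha}{(1-\alpha mn)mn}\sum_i\|y_i^0+\nabla f_i(x^* )\|^2$. 2. If every $f_i$ is $L$-smooth, then the bound of item 1 holds for any $0<\alpha\le\frac m{L^2+m^2n}$. In particular, for $\alpha=\frac m{m^2n+L^2}$, $$\mathbb{E}\left[\|x^k-x^*\|^2+\frac1{L^2n}\sum_{i=1}^n\|y_i^k+\nabla f_i(x^* )\|^2\right]\le\left(1-\frac{m^2}{m^2n+L^2}\right)^kR^0,$$ where $R^0=\|x^0-x^*\|^2+\frac1{L^2n}\sum_i\|y_i^0+\nabla f_i(x^* )\|^2$.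
   Context: A continuously differentiable $f:\mathbb{R}^p\to\mathbb{R}$ is $L$-smooth if $\|\nabla f(x)-\nabla f(y)\|\le L\|x-y\|$ for all $x,y$; $\mathcal F(0,L)$ denotes the convex, continuously differentiable, $L$-smooth functions. SDCA (without duality): $x^k=\frac1{mn}\sum_{i=1}^ny_i^k$ for all $k\ge0$, and $y_i^{k+1}=y_i^k-\alpha mn(\nabla f_i(x^k)+y_i^k)$ if $i=i_k$, $y_i^{k+1}=y_i^k$ otherwise. Expectation is over the random indices. *)

(* Defs.v *)
From HB Require Import structures.
From mathcomp Require Import all_boot all_order all_algebra.
From mathcomp Require Import all_classical all_reals all_analysis.
Set Implicit Arguments. Unset Strict Implicit. Unset Printing Implicit Defensive.
Import Order.TTheory GRing.Theory Num.Theory.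
Import numFieldNormedType.Exports.
Local Open Scope ring_scope.

Section Defs.
Variables (R : realType) (p : nat).

Definition dotp (u v : 'rV[R]_p) : R := \sum_(j < p) u ord0 j * v ord0 j.
Definition enorm (u : 'rV[R]_p) : R := Num.sqrt (dotp u u).

Definition is_gradient (f : 'rV[R]_p -> R) (gf : 'rV[R]_p -> 'rV[R]_p) : Prop :=
  forall x, differentiable f x /\ forall h, 'd f x h = dotp (gf x) h.

Definition C1_with_grad f gf : Prop := is_gradient f gf /\ continuous gf.

Definition L_smooth (L : R) (gf : 'rV[R]_p -> 'rV[R]_p) : Prop :=
  forall x y, enorm (gf x - gf y) <= L * enorm (x - y).

Definition convex_fun (f : 'rV[R]_p -> R) : Prop :=
  forall x y (t : R), 0 <= t -> t <= 1 ->
    f (t *: x + (1 - t) *: y) <= t * f x + (1 - t) * f y.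

Definition in_F0L (L : R) f gf : Prop :=
  convex_fun f /\ C1_with_grad f gf /\ L_smooth L gf.

Variables (n : nat) (m alpha : R) (grad : 'I_n -> 'rV[R]_p -> 'rV[R]_p).

Definition sdca_x (y : 'I_n -> 'rV[R]_p) : 'rV[R]_p :=
  (m * n%:R)^-1 *: \sum_(i < n) y i.

Definition sdca_step (y : 'I_n -> 'rV[R]_p) (ik : 'I_n) : 'I_n -> 'rV[R]_p :=
  fun i => if i == ik then y i - (alpha * m * n%:R) *: (grad i (sdca_x y) + y i)
           else y i.

(* y^k given the realised indices i_0, ..., i_{k-1} *)
Definition sdca_y (y0 : 'I_n -> 'rV[R]_p) (s : seq 'I_n) : 'I_n -> 'rV[R]_p :=
  foldl sdca_step y0 s.

(* Expectation over i_0,...,i_{k-1} IID uniform on 'I_n: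
   average over all k-tuples of indices. *)
Definition Exp_unif (k : nat) (F : seq 'I_n -> R) : R :=
  (n%:R ^+ k)^-1 * \sum_(s : k.-tuple 'I_n) F (tval s).

Definition lyap (c : R) (xstar : 'rV[R]_p) (y : 'I_n -> 'rV[R]_p) : R :=
  enorm (sdca_x y - xstar) ^+ 2
  + c * \sum_(i < n) enorm (y i + grad i xstar) ^+ 2.

End Defs.

(* Main.v *)
Require Import Defs.
From HB Require Import structures.
From mathcomp Require Import all_boot all_order all_algebra.
From mathcomp Require Import all_classical all_reals all_analysis.
From mathcomp Require Import ring lra.
Import Order.TTheory GRing.Theory Num.Theory.
Import numFieldNormedType.Exports.
Local Open Scope ring_scope.

Set Implicit Arguments. Unset Strict Implicit.

Section Dot.
Variables (R : realType) (p : nat).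
Implicit Types u v w : 'rV[R]_p.

Lemma dotpC u v : dotp u v = dotp v u.
Proof. by apply: eq_bigr => j _; rewrite mulrC. Qed.
Lemma dotpDl u v w : dotp (u + v) w = dotp u w + dotp v w.
Proof. by rewrite /dotp -big_split; apply: eq_bigr => j _; rewrite mxE mulrDl. Qed.
Lemma dotpDr u v w : dotp w (u + v) = dotp w u + dotp w v.
Proof. by rewrite dotpC dotpDl !(dotpC w). Qed.
Lemma dotpZl (a : R) u v : dotp (a *: u) v = a * dotp u v.
Proof. by rewrite /dotp mulr_sumr; apply: eq_bigr => j _; rewrite mxE mulrA. Qed.
Lemma dotpZr (a : R) u v : dotp u (a *: v) = a * dotp u v.
Proof. by rewrite dotpC dotpZl dotpC. Qed.
Lemma dotpNl u v : dotp (- u) v = - dotp u v.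
Proof. by rewrite -scaleN1r dotpZl mulN1r. Qed.
Lemma dotpNr u v : dotp u (- v) = - dotp u v.
Proof. by rewrite dotpC dotpNl dotpC. Qed.
Lemma dotpBl u v w : dotp (u - v) w = dotp u w - dotp v w.
Proof. by rewrite dotpDl dotpNl. Qed.
Lemma dotpBr u v w : dotp w (u - v) = dotp w u - dotp w v.
Proof. by rewrite dotpDr dotpNr. Qed.
Lemma dotp_sumr (I : finType) (F : I -> 'rV[R]_p) u :
  dotp u (\sum_i F i) = \sum_i dotp u (F i).
Proof.
rewrite /dotp exchange_big /=; apply: eq_bigr => j _.
by rewrite summxE mulr_sumr.
Qed.
Lemma dotp_suml (I : finType) (F : I -> 'rV[R]_p) u :
  dotp (\sum_i F i) u = \sum_i dotp (F i) u.
Proof. by rewrite dotpC dotp_sumr; apply: eq_bigr => i _; rewrite dotpC. Qed.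
Lemma dotp_ge0 u : 0 <= dotp u u.
Proof. by apply: sumr_ge0 => j _; rewrite -expr2 sqr_ge0. Qed.
Lemma dotp_eq0 u : dotp u u = 0 -> u = 0.
Proof.
move=> /eqP; rewrite /dotp psumr_eq0 => [/allP H|j _]; last by rewrite -expr2 sqr_ge0.
apply/rowP => j; rewrite mxE; apply/eqP.
have := H j (mem_index_enum _); rewrite -expr2 sqrf_eq0; by [].
Qed.
Lemma enorm_sq u : enorm u ^+ 2 = dotp u u.
Proof. by rewrite /enorm sqr_sqrtr // dotp_ge0. Qed.
Lemma enorm_ge0 u : 0 <= enorm u.
Proof. exact: sqrtr_ge0. Qed.

Lemma smooth_sq (L : R) (gf : 'rV[R]_p -> 'rV[R]_p) x y : 0 <= L -> L_smooth L gf ->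
  dotp (gf x - gf y) (gf x - gf y) <= L ^+ 2 * dotp (x - y) (x - y).
Proof.
move=> L0 /(_ x y) H; rewrite -!enorm_sq.
have a0 := enorm_ge0 (gf x - gf y); have b0 := enorm_ge0 (x - y).
set a := enorm _ in H a0 *; set b := enorm _ in H b0 *.
nra.
Qed.
End Dot.

Lemma sum_tupleS (R : realType) (n k : nat) (F : seq 'I_n -> R) :
  \sum_(t : k.+1.-tuple 'I_n) F (tval t) =
  \sum_(i < n) \sum_(s : k.-tuple 'I_n) F (i :: tval s).
Proof.
rewrite pair_big /=.
rewrite (reindex (fun q : 'I_n * k.-tuple 'I_n => [tuple of q.1 :: q.2])) //=.
exists (fun t : k.+1.-tuple 'I_n => (thead t, [tuple of behead t])).
  by move=> [i s] _ /=; rewrite theadE; congr pair; apply: val_inj.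
by move=> t _; rewrite [in RHS](tuple_eta t).
Qed.

Unset Implicit Arguments.

Section AnA.
Variables (R : realType) (p : nat).

Lemma dir_le (f : 'rV[R]_p -> R) x h (a K : R) : differentiable f x ->
  (forall t : R, 0 < t -> t <= 1 -> t^-1 * (f (t *: h + x) - f x) <= a + t * K) ->
  'd f x h <= a.
Proof.
move=> df Hb; rewrite -deriveE //.
have dv : derivable f x h := diff_derivable (v:=h) df.
rewrite /derive cvg_at_rightE //.
apply/ler_addgt0Pr => e e0.
apply: limr_le.
  rewrite -cvg_at_rightE //.
  apply: cvg_trans dv; apply: cvg_app.
  move=> A [d dgt0 Ad]; exists d => // y yd ygt0; apply: Ad => //.
  exact/lt0r_neq0.
have K1 : 0 < `|K| + 1 by rewrite ltr_wpDl.
exists (Num.min 1 (e / (`|K| + 1))) => /=.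
  by rewrite lt_min ltr01 divr_gt0.
move=> t; rewrite /= sub0r normrN lt_min => /andP[t1 te] tgt0.
rewrite gtr0_norm // in t1 te.
rewrite ltr_pdivlMr // in te.
apply: le_trans (Hb t tgt0 (ltW t1)) _.
have := ler_norm K; nra.
Qed.
End AnA.

Section An.
Variables (R : realType) (p : nat).

Lemma phi_derive (f : 'rV[R]_p -> R) gf x d (t : R) : is_gradient f gf ->
  is_derive t 1 (fun s : R => f (s *: d + x)) (dotp (gf (t *: d + x)) d).
Proof.
move=> Hg; have [df dd] := Hg (t *: d + x).
have eqf : (fun h : R => h^-1 *: (((fun s : R => f (s *: d + x)) \o shift t) (h *: 1)
     - f (t *: d + x))) =
   (fun h : R => h^-1 *: ((f \o shift (t *: d + x)) (h *: d) - f (t *: d + x))).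
  apply/funext => h /=; congr (_ *: (f _ - _)).
  by rewrite [h *: 1]mulr1 scalerDl addrA.
split; first by rewrite /derivable eqf; exact: diff_derivable.
by rewrite /derive eqf -/(derive f (t *: d + x) d) deriveE.
Qed.

Lemma descent (f : 'rV[R]_p -> R) gf (L : R) x d : 0 < L ->
  is_gradient f gf -> L_smooth L gf ->
  f (d + x) <= f x + dotp (gf x) d + L / 2 * dotp d d.
Proof.
move=> L0 Hg Hs.
pose A := dotp (gf x) d; pose B := L / 2 * dotp d d.
have h1 t := phi_derive f gf x d t Hg.
have h2 (t : R) : is_derive t (1:R) (fun s : R => A * s) A.
  have := @is_deriveZ R R R (@id R) A t 1 1 (is_derive_id _ _).
  by rewrite /= [A *: 1]mulr1.
have h3 (t : R) : is_derive t (1:R) (fun s : R => B * s * s) (2 * B * t).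
  have := @is_deriveM R R (fun s : R => B * s) (@id R) t 1 B 1 _ (is_derive_id _ _).
  have hB : is_derive t (1:R) (fun s : R => B * s) B.
    have := @is_deriveZ R R R (@id R) B t 1 1 (is_derive_id _ _).
    by rewrite /= [B *: 1]mulr1.
  move=> /(_ hB) H.
  have -> : (fun s : R => B * s * s) = (fun s : R => B * s) * (@id R) by apply/funext.
  apply: (is_derive_eq H).
  by change ((B * t) * 1 + t * B = 2 * B * t); ring.
pose q1 := (fun s : R => A * s); pose q2 := (fun s : R => B * s * s).
pose psi : R -> R := (fun s : R => f (s *: d + x)) - (q1 + q2).
have dpsi (t : R) : is_derive t (1:R) psi (dotp (gf (t *: d + x)) d - (A + 2 * B * t)).
  exact: is_deriveB (h1 t) (is_deriveD (h2 t) (h3 t)).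
have neg (t : R) : 0 < t -> dotp (gf (t *: d + x)) d - (A + 2 * B * t) <= 0.
  move=> t0.
  set g := gf (t *: d + x) - gf x.
  have e1 : dotp (gf (t *: d + x)) d - A = dotp g d by rewrite /g dotpBl.
  have e2 := @smooth_sq R p L gf (t *: d + x) x (ltW L0) Hs.
  rewrite -/g (_ : t *: d + x - x = t *: d) ?dotpZl ?dotpZr in e2; last by rewrite addrK.
  clearbody g.
  have e3 := @dotp_ge0 R p (g - (L * t) *: d).
  rewrite !(dotpBl, dotpBr, dotpZl, dotpZr) (dotpC d g) in e3.
  have dd0 := dotp_ge0 d.
  rewrite /B. 
  have Lt : 0 < L * t by rewrite mulr_gt0.
  set G := dotp g g in e2 e3; set D := dotp d d in e2 e3 dd0 *; set P := dotp g d in e1 e3.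
  have : 2 * (L * t) * P <= 2 * (L * t) * (L * t * D) by nra.
  rewrite ler_pM2l ?mulr_gt0 // => HP.
  have -> : dotp (gf (t *: d + x)) d - (A + 2 * (L / 2 * D) * t) = P - L * t * D.
    by rewrite -e1; field.
  by rewrite subr_le0.
have mono : psi 1 <= psi 0.
  apply: (@ler0_derive1_le_cc R psi 0 1).
  - by move=> t _; have [] := dpsi t.
  - move=> t; rewrite in_itv /= => /andP[t0 _].
    by rewrite derive1E; have [_ ->] := dpsi t; exact: neg.
  - apply: continuous_subspaceT => t.
    apply: differentiable_continuous; apply/derivable1_diffP.
    by have [] := dpsi t.
  - by rewrite in_itv /= lexx ler01.
  - by rewrite in_itv /= lexx ler01.
  - exact: ler01.
move: mono; change (f (1 *: d + x) - (A * 1 + B * 1 * 1) <= f (0 *: d + x) - (A * 0 + B * 0 * 0) -> f (d + x) <= f x + A + B).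
rewrite scale1r scale0r add0r.
lra.
Qed.
End An.

Set Implicit Arguments. Unset Strict Implicit.

Section An2.
Variables (R : realType) (p : nat).

Lemma dir_ge (f : 'rV[R]_p -> R) x h (a K : R) : differentiable f x ->
  (forall t : R, 0 < t -> t <= 1 -> a - t * K <= t^-1 * (f (t *: h + x) - f x)) ->
  a <= 'd f x h.
Proof.
move=> df Hb; rewrite -deriveE //.
have dv : derivable f x h := diff_derivable (v:=h) df.
rewrite /derive cvg_at_rightE //.
apply/ler_addgt0Pr => e e0; rewrite -lerBlDr.
apply: limr_ge.
  rewrite -cvg_at_rightE //.
  apply: cvg_trans dv; apply: cvg_app.
  move=> A [d dgt0 Ad]; exists d => // y yd ygt0; apply: Ad => //.
  exact/lt0r_neq0.
have K1 : 0 < `|K| + 1 by rewrite ltr_wpDl.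
exists (Num.min 1 (e / (`|K| + 1))) => /=.
  by rewrite lt_min ltr01 divr_gt0.
move=> t; rewrite /= sub0r normrN lt_min => /andP[t1 te] tgt0.
rewrite gtr0_norm // in t1 te.
rewrite ltr_pdivlMr // in te.
apply: le_trans (Hb t tgt0 (ltW t1)).
have := ler_norm K; nra.
Qed.

Lemma grad_ineq (f : 'rV[R]_p -> R) gf x y : convex_fun f -> is_gradient f gf ->
  f x + dotp (gf x) (y - x) <= f y.
Proof.
move=> Hc Hg; have [dfx dd] := Hg x; rewrite -dd.
suff : 'd f x (y - x) <= f y - f x by lra.
apply: (@dir_le R p f x (y - x) (f y - f x) 0 dfx) => t t0 t1.
rewrite mulr0 addr0.
have := Hc y x t (ltW t0) t1.
have -> : t *: y + (1 - t) *: x = t *: (y - x) + x.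
  by apply/rowP => j; rewrite !mxE; ring.
move=> H; rewrite mulrC ler_pdivrMr //; nra.
Qed.

Lemma grad_mono (f : 'rV[R]_p -> R) gf x y : convex_fun f -> is_gradient f gf ->
  0 <= dotp (gf x - gf y) (x - y).
Proof.
move=> Hc Hg; have h1 := grad_ineq x y Hc Hg; have h2 := grad_ineq y x Hc Hg.
have e : y - x = - (x - y) by rewrite opprB.
rewrite e dotpNr in h1.
rewrite dotpBl; lra.
Qed.

Lemma cocoer_half (f : 'rV[R]_p -> R) gf (L : R) x y : 0 < L -> in_F0L L f gf ->
  f x + dotp (gf x) (y - x) + dotp (gf y - gf x) (gf y - gf x) / (2 * L) <= f y.
Proof.
move=> L0 [Hc [[Hg _] Hs]].
set u := gf y - gf x.
have eu : dotp (gf y) u - dotp (gf x) u = dotp u u by rewrite -dotpBl.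
clearbody u.
pose z := y - L^-1 *: u.
have ha := grad_ineq x z Hc Hg.
have hb := @descent R p f gf L y (z - y) L0 Hg Hs.
rewrite subrK in hb.
have ez1 : z - x = (y - x) - L^-1 *: u.
  by rewrite /z; apply/rowP => j; rewrite !mxE; ring.
have ez2 : z - y = - (L^-1 *: u).
  by rewrite /z; apply/rowP => j; rewrite !mxE; ring.
rewrite ez1 in ha; rewrite ez2 in hb.
rewrite dotpBr dotpZr in ha.
rewrite !(dotpNr, dotpNl, dotpZr, dotpZl) in hb.
have uu := dotp_ge0 u.
rewrite opprK in hb.
set U := dotp u u in hb eu uu *.
set gyu := dotp (gf y) u in hb eu.  set gxu := dotp (gf x) u in ha eu.
have Li : L^-1 * L = 1 by rewrite mulVf // gt_eqF.
have -> : U / (2 * L) = L^-1 * U / 2 by field; rewrite gt_eqF.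
have E : L / 2 * (L^-1 * (L^-1 * U)) = L^-1 * U / 2 by field; rewrite gt_eqF.
rewrite E in hb.
have E2 : L^-1 * gyu - L^-1 * gxu = L^-1 * U by rewrite -eu mulrBr.
lra.
Qed.

Lemma cocoer (f : 'rV[R]_p -> R) gf (L : R) x y : 0 < L -> in_F0L L f gf ->
  dotp (gf y - gf x) (gf y - gf x) <= L * dotp (gf y - gf x) (y - x).
Proof.
move=> L0 H.
have h1 := cocoer_half x y L0 H; have h2 := cocoer_half y x L0 H.
have e1 : gf x - gf y = - (gf y - gf x) by rewrite opprB.
have e2 : x - y = - (y - x) by rewrite opprB.
rewrite e1 e2 !dotpNl !dotpNr opprK in h2.
have uu := dotp_ge0 (gf y - gf x).
set U := dotp (gf y - gf x) (gf y - gf x) in h1 h2 uu *.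
have -> : dotp (gf y - gf x) (y - x) = dotp (gf y) (y - x) - dotp (gf x) (y - x) by rewrite dotpBl.
have : U / (2 * L) + U / (2 * L) = U / L by field; rewrite gt_eqF.
move=> E.
have E2 : L * (U / L) = U by field; rewrite gt_eqF.
set P := dotp (gf y) (y - x) - dotp (gf x) (y - x).
have HP : U / L <= P by rewrite /P; lra.
rewrite -{1}E2; nra.
Qed.

End An2.

Section St.
Variables (R : realType) (p : nat).

Lemma stationary (F : 'rV[R]_p -> R) GF (m nR : R) xs : 0 < m -> 0 < nR ->
  is_gradient F GF ->
  (forall x, nR^-1 * F xs + m / 2 * enorm xs ^+ 2 <= nR^-1 * F x + m / 2 * enorm x ^+ 2) ->
  GF xs = - (m * nR) *: xs.
Proof.
move=> m0 n0 Hg Hmin.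
have key h : - (m * nR) * dotp xs h <= dotp (GF xs) h.
  have [dF dd] := Hg xs; rewrite -dd.
  apply: (@dir_ge R p F xs h _ (m * nR / 2 * dotp h h) dF) => t t0 t1.
  have := Hmin (t *: h + xs); rewrite !enorm_sq.
  rewrite !(dotpDl, dotpDr, dotpZl, dotpZr) (dotpC h xs).
  set D := F (t *: h + xs) - F xs.
  have -> : F (t *: h + xs) = D + F xs by rewrite /D subrK.
  clearbody D => Hm.
  have hh := dotp_ge0 h.
  set xh := dotp xs h in Hm *; set H2 := dotp h h in Hm hh *.
  set X := F xs in Hm.
  have nn : nR * nR^-1 = 1 by rewrite divff // gt_eqF.
  have Hm2 : nR^-1 * D >= - (m / 2) * (2 * t * xh + t * (t * H2)) by lra.
  have Hm3 := ler_wpM2l (ltW n0) Hm2.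
  rewrite [nR * (nR^-1 * D)]mulrA nn mul1r in Hm3.
  have tt : t^-1 * t = 1 by rewrite mulVf // gt_eqF.
  have ti : 0 < t^-1 by rewrite invr_gt0.
  suff HH : t * (- (m * nR) * xh - t * (m * nR / 2 * H2)) <= D.
    have := ler_wpM2l (ltW ti) HH; rewrite [t^-1 * (t * _)]mulrA tt mul1r; by [].
  nra.
pose w := GF xs + (m * nR) *: xs.
have := key (- w); rewrite !dotpNr mulrN lerN2 => Hw.
have ww : dotp w w = 0.
  apply/eqP; rewrite eq_le dotp_ge0 andbT.
  rewrite {1}/w dotpDl dotpZl; lra.
have /dotp_eq0 /eqP := ww; rewrite /w addr_eq0 => /eqP ->.
by rewrite scaleNr.
Qed.
End St.

Lemma sum_lin (R : realType) (I : finType) (k1 k2 k3 k4 k5 : R) (a b c d e : I -> R) :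
  \sum_i (k1 * a i + k2 * b i + k3 * c i + k4 * d i + k5 * e i) =
  k1 * \sum_i a i + k2 * \sum_i b i + k3 * \sum_i c i + k4 * \sum_i d i + k5 * \sum_i e i.
Proof. by rewrite !big_split /= -!mulr_sumr. Qed.

Section Alg.
Variables (R : realType) (p : nat).
Implicit Types u v w : 'rV[R]_p.

Lemma expand_sq (e a b : 'rV[R]_p) (k : R) :
  dotp (e - k *: (a + b)) (e - k *: (a + b)) =
  dotp e e - 2 * k * (dotp e a + dotp e b) + k ^+ 2 * (dotp a a + 2 * dotp a b + dotp b b).
Proof.
rewrite !(dotpBl, dotpBr, dotpDl, dotpDr, dotpNl, dotpNr, dotpZl, dotpZr).
rewrite ?(dotpC a e) ?(dotpC b e) ?(dotpC b a). ring.
Qed.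

Variables (n : nat) (m alpha : R) (grad : 'I_n -> 'rV[R]_p -> 'rV[R]_p) (xs : 'rV[R]_p).
Hypotheses (n0 : (0 < n)%N) (m0 : 0 < m) (a0 : 0 < alpha).
Let nR : R := n%:R.
Let beta := alpha * m * nR.
Hypothesis b1 : beta < 1.
Hypothesis Hstat : \sum_i grad i xs = - (m * nR) *: xs.

Lemma nR_gt0 : 0 < nR. Proof. by rewrite /nR ltr0n. Qed.

Lemma step_sum y i : \sum_j sdca_step m alpha grad y i j =
  \sum_j y j - (alpha * m * nR) *: (grad i (sdca_x m y) + y i).
Proof.
rewrite (bigD1 i) //= [X in _ = X - _](bigD1 i) //=.
rewrite /sdca_step eqxx.
rewrite (eq_bigr (fun j => y j)); last by move=> j /negbTE ->.
by rewrite addrAC.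
Qed.

Lemma step_x y i : sdca_x m (sdca_step m alpha grad y i) =
  sdca_x m y - alpha *: (grad i (sdca_x m y) + y i).
Proof.
rewrite {1}/sdca_x step_sum scalerBr scalerA -/(sdca_x m y).
have nz : m * nR != 0 by rewrite mulf_neq0 // gt_eqF // nR_gt0.
congr (_ - _ *: _); rewrite /nR in nz *; field.
by rewrite pnatr_eq0 -lt0n n0 /= gt_eqF.
Qed.

Lemma step_norms y i :
  \sum_j enorm (sdca_step m alpha grad y i j + grad j xs) ^+ 2 =
  \sum_j enorm (y j + grad j xs) ^+ 2 - enorm (y i + grad i xs) ^+ 2
  + enorm (y i - (alpha * m * nR) *: (grad i (sdca_x m y) + y i) + grad i xs) ^+ 2.
Proof.
rewrite (bigD1 i) //= [X in _ = X - _ + _](bigD1 i) //=.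
rewrite /sdca_step eqxx.
rewrite (eq_bigr (fun j => enorm (y j + grad j xs) ^+ 2)); last by move=> j /negbTE ->.
rewrite /nR; ring.
Qed.

Let c := alpha / ((1 - beta) * (m * nR)).

Hypothesis Hcond : forall x,
  alpha / (1 - beta) * \sum_i dotp (grad i x - grad i xs) (grad i x - grad i xs)
  <= 2 * \sum_i dotp (x - xs) (grad i x - grad i xs) + m * nR * dotp (x - xs) (x - xs).

Lemma one_step y :
  nR^-1 * \sum_i lyap m grad c xs (sdca_step m alpha grad y i)
  <= (1 - m * alpha) * lyap m grad c xs y.
Proof.
set x := sdca_x m y.
pose e := x - xs; pose ei i := y i + grad i xs; pose ui i := grad i x - grad i xs.
pose S := \sum_j dotp (ei j) (ei j).
pose a i := dotp e (ei i); pose b i := dotp e (ui i); pose E i := dotp (ei i) (ei i).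
pose C i := dotp (ei i) (ui i); pose P i := dotp (ui i) (ui i).
pose k1 := -2 * alpha; pose k2 := -2 * alpha; pose k3 := alpha ^+ 2 + c * (beta ^+ 2 - 2 * beta).
pose k4 := 2 * alpha ^+ 2 + c * (2 * beta ^+ 2 - 2 * beta); pose k5 := alpha ^+ 2 + c * beta ^+ 2.
have eL : lyap m grad c xs y = dotp e e + c * S.
  rewrite /lyap -/x enorm_sq; congr (_ + _ * _); apply: eq_bigr => j _; exact: enorm_sq.
have per i : lyap m grad c xs (sdca_step m alpha grad y i) =
   dotp e e + c * S + (k1 * a i + k2 * b i + k3 * E i + k4 * C i + k5 * P i).
  rewrite /lyap step_x -/x step_norms -/x.
  have v1 : x - alpha *: (grad i x + y i) - xs = e - alpha *: (ei i + ui i).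
    by apply/rowP => j; rewrite !mxE; ring.
  have v2 : y i - (alpha * m * nR) *: (grad i x + y i) + grad i xs =
            ei i - beta *: (ei i + ui i).
    by apply/rowP => j; rewrite !mxE /beta; ring.
  rewrite v1 v2 !enorm_sq !expand_sq.
  have -> : \sum_j enorm (y j + grad j xs) ^+ 2 = S.
    by apply: eq_bigr => j _; exact: enorm_sq.
  rewrite /a /b /E /C /P /k1 /k2 /k3 /k4 /k5; ring.
rewrite (eq_bigr _ (fun i _ => per i)) big_split /= sum_lin sumr_const card_ord.
have sy : \sum_i y i = (m * nR) *: x.
  rewrite /x /sdca_x scalerA divff ?scale1r //.
  by rewrite mulf_neq0 // gt_eqF // nR_gt0.
have sa : \sum_i a i = m * nR * dotp e e.
  rewrite /a -dotp_sumr /ei big_split /= sy Hstat.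
  have -> : (m * nR) *: x + - (m * nR) *: xs = (m * nR) *: e.
    by rewrite /e scalerBr scaleNr.
  by rewrite dotpZr.
have sE : \sum_i E i = S by [].
have Hc := Hcond x.
rewrite -/e in Hc.
have {}Hc : alpha / (1 - beta) * \sum_i P i <= 2 * \sum_i b i + m * nR * dotp e e := Hc.
rewrite eL sa sE -mulr_natr -/nR.
set Ee := dotp e e in Hc *; set SB := \sum_i b i in Hc *; set SP := \sum_i P i in Hc *.
set SC := \sum_i C i.
have nz : nR != 0 by rewrite gt_eqF // nR_gt0.
have bz : 1 - beta != 0 by rewrite subr_eq0 eq_sym lt_eqF.
have iden : nR^-1 * ((Ee + c * S) * nR + (k1 * (m * nR * Ee) + k2 * SB + k3 * S + k4 * SC + k5 * SP))
   - (1 - m * alpha) * (Ee + c * S) = alpha / nR * (alpha / (1 - beta) * SP - 2 * SB - m * nR * Ee).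
  rewrite /k1 /k2 /k3 /k4 /k5 /c /beta; field.
  by rewrite /beta in bz; rewrite bz nz gt_eqF.
have : alpha / nR * (alpha / (1 - beta) * SP - 2 * SB - m * nR * Ee) <= 0.
  apply: mulr_ge0_le0; first by rewrite divr_ge0 // ltW // nR_gt0.
  lra.
lra.
Qed.

End Alg.


Lemma sum_tuple0 (R : realType) (n : nat) (F : seq 'I_n -> R) :
  \sum_(t : 0.-tuple 'I_n) F (tval t) = F [::].
Proof.
rewrite (big_pred1 [tuple]) // => t /=; apply/esym/eqP; exact: tuple0.
Qed.

Lemma exp_bound (R : realType) (p n : nat) (m alpha rho : R)
  (grad : 'I_n -> 'rV[R]_p -> 'rV[R]_p) (V : ('I_n -> 'rV[R]_p) -> R) :
  (0 < n)%N -> 0 <= rho ->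
  (forall y, (n%:R)^-1 * \sum_i V (sdca_step m alpha grad y i) <= rho * V y) ->
  forall k y0, Exp_unif k (fun s => V (sdca_y m alpha grad y0 s)) <= rho ^+ k * V y0.
Proof.
move=> n0 r0 Hs; elim=> [|k IH] y0.
  by rewrite /Exp_unif (sum_tuple0 (fun s => V (sdca_y m alpha grad y0 s))) expr0 invr1 !mul1r.
rewrite /Exp_unif (@sum_tupleS _ _ k (fun s => V (sdca_y m alpha grad y0 s))).
have nz : (n%:R : R) != 0 by rewrite pnatr_eq0 -lt0n.
have -> : ((n%:R : R) ^+ k.+1)^-1 = (n%:R)^-1 * (n%:R ^+ k)^-1.
  by rewrite exprS invfM.
rewrite -mulrA mulr_sumr.
apply: (@le_trans _ _ ((n%:R)^-1 * \sum_i rho ^+ k * V (sdca_step m alpha grad y0 i))).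
  apply: ler_wpM2l; first by rewrite invr_ge0 ler0n.
  apply: ler_sum => i _; exact: IH.
rewrite -mulr_sumr mulrCA exprS -mulrA.
rewrite [rho * (_ * _)]mulrCA. apply: ler_wpM2l; first exact: exprn_ge0.
exact: Hs.
Qed.

Theorem corollary3 (R : realType) (p n : nat) (m L : R)
  (f : 'I_n -> 'rV[R]_p -> R) (grad : 'I_n -> 'rV[R]_p -> 'rV[R]_p)
  (xstar : 'rV[R]_p) (y0 : 'I_n -> 'rV[R]_p) :
  (0 < n)%N -> 0 < m -> 0 < L ->
  (forall i, C1_with_grad (f i) (grad i)) ->
  in_F0L L (fun x => \sum_(i < n) f i x) (fun x => \sum_(i < n) grad i x) ->
  (forall x, (n%:R)^-1 * \sum_(i < n) f i xstar + m / 2 * enorm xstar ^+ 2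
             <= (n%:R)^-1 * \sum_(i < n) f i x + m / 2 * enorm x ^+ 2) ->
  let c alpha := alpha / ((1 - alpha * m * n%:R) * (m * n%:R)) in
  (* item 1 *)
  ((forall i, in_F0L L (f i) (grad i)) ->
   forall alpha, 0 < alpha -> alpha <= 2 / (L + 2 * m * n%:R) ->
   forall k : nat,
     Exp_unif k (fun s => lyap m grad (c alpha) xstar (sdca_y m alpha grad y0 s))
     <= (1 - m * alpha) ^+ k * lyap m grad (c alpha) xstar y0)
  /\
  (* item 2 *)
  ((forall i, L_smooth L (grad i)) ->
   (forall alpha, 0 < alpha -> alpha <= m / (L ^+ 2 + m ^+ 2 * n%:R) ->
    forall k : nat,
      Exp_unif k (fun s => lyap m grad (c alpha) xstar (sdca_y m alpha grad y0 s))
      <= (1 - m * alpha) ^+ k * lyap m grad (c alpha) xstar y0)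
   /\
   (let alpha := m / (m ^+ 2 * n%:R + L ^+ 2) in
    forall k : nat,
      Exp_unif k (fun s => lyap m grad (L ^+ 2 * n%:R)^-1 xstar
                              (sdca_y m alpha grad y0 s))
      <= (1 - m ^+ 2 / (m ^+ 2 * n%:R + L ^+ 2)) ^+ k
         * lyap m grad (L ^+ 2 * n%:R)^-1 xstar y0)).
Proof.
move=> hn hm hL hC1 HF Hmin c.
have nR0 : (0 : R) < n%:R by rewrite ltr0n.
have Hstat : \sum_i grad i xstar = - (m * n%:R) *: xstar.
  have := @stationary R p (fun x => \sum_(i < n) f i x) (fun x => \sum_(i < n) grad i x)
    m n%:R xstar hm nR0 HF.2.1.1 Hmin.
  by [].
have gen : forall alpha, 0 < alpha -> alpha * m * n%:R < 1 -> 0 <= 1 - m * alpha ->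
   (forall x : 'rV_p,
     alpha / (1 - alpha * m * n%:R) *
     \sum_i dotp (grad i x - grad i xstar) (grad i x - grad i xstar) <=
     2 * \sum_i dotp (x - xstar) (grad i x - grad i xstar) +
     m * n%:R * dotp (x - xstar) (x - xstar)) ->
   forall k : nat,
     Exp_unif k (fun s => lyap m grad (c alpha) xstar (sdca_y m alpha grad y0 s))
     <= (1 - m * alpha) ^+ k * lyap m grad (c alpha) xstar y0.
  move=> alpha a0 b1 r0 Hc k.
  apply: (@exp_bound R p n m alpha (1 - m * alpha) grad _ hn r0) => y.
  exact: (@one_step R p n m alpha grad xstar hn hm a0 b1 Hstat Hc y).
have n1 : (1 : R) <= n%:R by rewrite ler1n.
split.
  move=> Hi alpha a0 aL.
  have D0 : 0 < L + 2 * m * n%:R by rewrite ltr_wpDr // mulr_ge0 // ?mulr_ge0 // ltW.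
  rewrite ler_pdivlMr // in aL.
  have b1 : alpha * m * n%:R < 1 by nra.
  apply: gen => //.
    have : 0 <= alpha * m * (n%:R - 1) by apply: mulr_ge0; [rewrite mulr_ge0 // ltW | rewrite subr_ge0].
    have -> : alpha * m * (n%:R - 1) = alpha * m * n%:R - m * alpha by ring.
    lra.
  move=> x.
  have HP : \sum_i dotp (grad i x - grad i xstar) (grad i x - grad i xstar)
        <= L * \sum_i dotp (x - xstar) (grad i x - grad i xstar).
    rewrite mulr_sumr; apply: ler_sum => i _.
    rewrite dotpC; exact: cocoer.
  have P0 : 0 <= \sum_i dotp (grad i x - grad i xstar) (grad i x - grad i xstar).
    by apply: sumr_ge0 => i _; exact: dotp_ge0.
  have E0 := dotp_ge0 (x - xstar).
  set SP := \sum_i _ in HP P0 *; set SB := \sum_i _ in HP *.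
  set Ee := dotp _ _ in E0 *.
  have bz : 0 < 1 - alpha * m * n%:R by rewrite subr_gt0.
  have q0 : 0 < alpha / (1 - alpha * m * n%:R) by rewrite divr_gt0.
  have qL : alpha / (1 - alpha * m * n%:R) * L <= 2.
    rewrite mulrAC ler_pdivrMr //; nra.
  have SB0 : 0 <= SB by nra.
  set q := alpha / _ in q0 qL *.
  have h1 : q * SP <= q * (L * SB) by rewrite ler_pM2l.
  have h2 : q * L * SB <= 2 * SB by rewrite ler_wpM2r.
  have h3 : 0 <= m * n%:R * Ee by rewrite !mulr_ge0 // ltW.
  rewrite mulrA in h1; lra.
move=> Hs.
have gen2 : forall alpha, 0 < alpha -> alpha <= m / (L ^+ 2 + m ^+ 2 * n%:R) ->
    forall k : nat,
      Exp_unif k (fun s => lyap m grad (c alpha) xstar (sdca_y m alpha grad y0 s))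
      <= (1 - m * alpha) ^+ k * lyap m grad (c alpha) xstar y0.
  move=> alpha a0 aL.
  have L2 : 0 < L ^+ 2 by rewrite exprn_gt0.
  have M2 : 0 <= m ^+ 2 * n%:R by rewrite mulr_ge0 // sqr_ge0.
  have D0 : 0 < L ^+ 2 + m ^+ 2 * n%:R by lra.
  rewrite ler_pdivlMr // in aL.
  have b1 : alpha * m * n%:R < 1.
    have : alpha * m ^+ 2 * n%:R < m by nra.
    move=> H1; rewrite -(ltr_pM2r hm) mul1r; nra.
  apply: gen => //.
    have : 0 <= alpha * m * (n%:R - 1) by apply: mulr_ge0; [rewrite mulr_ge0 // ltW | rewrite subr_ge0].
    have -> : alpha * m * (n%:R - 1) = alpha * m * n%:R - m * alpha by ring.
    lra.
  move=> x.
  have HP : \sum_i dotp (grad i x - grad i xstar) (grad i x - grad i xstar)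
        <= n%:R * (L ^+ 2 * dotp (x - xstar) (x - xstar)).
    apply: (le_trans (ler_sum _ (fun i _ => smooth_sq x xstar (ltW hL) (Hs i)))).
    by rewrite sumr_const card_ord mulr_natl.
  have HB : 0 <= \sum_i dotp (x - xstar) (grad i x - grad i xstar).
    rewrite -dotp_sumr sumrB dotpC.
    exact: (@grad_mono R p (fun x => \sum_(i < n) f i x) (fun x => \sum_(i < n) grad i x) x xstar HF.1 HF.2.1.1).
  have E0 := dotp_ge0 (x - xstar).
  set SP := \sum_i _ in HP *; set SB := \sum_i _ in HB *.
  set Ee := dotp _ _ in E0 HP *.
  have bz : 0 < 1 - alpha * m * n%:R by rewrite subr_gt0.
  have q0 : 0 < alpha / (1 - alpha * m * n%:R) by rewrite divr_gt0.
  have qL : alpha / (1 - alpha * m * n%:R) * L ^+ 2 <= m.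
    rewrite mulrAC ler_pdivrMr //; nra.
  set q := alpha / _ in q0 qL *.
  have h1 : q * SP <= q * (n%:R * (L ^+ 2 * Ee)) by rewrite ler_pM2l.
  have nE : 0 <= n%:R * Ee by rewrite mulr_ge0 // ltW.
  have h2 : q * L ^+ 2 * (n%:R * Ee) <= m * (n%:R * Ee) by rewrite ler_wpM2r.
  have e1 : q * (n%:R * (L ^+ 2 * Ee)) = q * L ^+ 2 * (n%:R * Ee) by ring.
  have e2 : m * n%:R * Ee = m * (n%:R * Ee) by ring.
  lra.
split; first exact: gen2.
move=> alpha k.
have L2 : 0 < L ^+ 2 by rewrite exprn_gt0.
have M2 : 0 <= m ^+ 2 * n%:R by rewrite mulr_ge0 // sqr_ge0.
have D0 : 0 < m ^+ 2 * n%:R + L ^+ 2 by lra.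
have a0 : 0 < alpha by rewrite divr_gt0.
have E1 : c alpha = (L ^+ 2 * n%:R)^-1.
  rewrite /c /alpha; field.
  have -> : m ^+ 2 * n%:R + L ^+ 2 - m * m * n%:R = L ^+ 2 by ring.
  by rewrite !gt_eqF.
have E2 : 1 - m * alpha = 1 - m ^+ 2 / (m ^+ 2 * n%:R + L ^+ 2).
  by rewrite /alpha mulrA -expr2.
rewrite -E1 -E2; apply: gen2 => //.
by rewrite /alpha addrC.
Qed.
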